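(* $\mathcal{R}_{MS}\subset\mathbb{C}_-=\{z\in\mathbb{C}:\Re(z)<0\}$. Equivalently, for every $z\in\mathbb{C}$ with $\Re(z)\ge0$, $\mathbb{E}\,\bigl|1+\frac{z}{1-z\tau_1}\bigr|^2\ge1$ (the expectation possibly being $+\infty$).
   Context: Let $\tau_1,\tau_2,\ldots$ be independent random variables uniformly distributed on $[0,1]$. Applying either of the randomized implicit RK2 schemes (S1) or (S2) with step $h>0$ to Dahlquist's test equation $z'(t)=\lambda z(t)$, $z(0)=1$, $\lambda\in\mathbb{C}$, gives, with $z=\lambda h$, $V^k=\prod_{j=1}^k\bigl(1+\frac{z}{1-z\tau_j}\bigr)$, $k\ge0$ (almost surely well defined). The mean-square stability region is $\mathcal{R}_{MS}=\{z\in\mathbb{C}: V^k\to0 \text{ in } L^2(\Omega)\text{ as } k\to\infty\}$; equivalently $\mathcal{R}_{MS}=\{z\in\mathbb{C}: \mathbb{E}\,|1+\frac{z}{1-z\tau_1}|^2<1\}$. *)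

(* Defs.v *)
From HB Require Import structures.
From mathcomp Require Import all_boot all_order all_algebra.
From mathcomp Require Import all_classical all_reals all_analysis.
From mathcomp Require Import complex.
Set Implicit Arguments. Unset Strict Implicit. Unset Printing Implicit Defensive.
Import Order.TTheory GRing.Theory Num.Theory.
Local Open Scope ring_scope.
Local Open Scope classical_set_scope.

(* Amplification factor of the randomized implicit RK2 schemes on Dahlquist's
   test equation, for z = lambda h and a realisation t of tau_1 in [0,1]:
   R(z,t) = 1 + z / (1 - z t).  (Division by 0 is the library's x/0 = 0;
   this happens for at most one t, a Lebesgue-null set.) *)
Definition ampl (R : realType) (z : R[i]) (t : R) : R[i] :=
  (1 + z / (1 - z * t%:C))%C.

Definition sqmod (R : realType) (w : R[i]) : R :=
  complex.Re w ^+ 2 + complex.Im w ^+ 2.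

(* E |R(z,tau_1)|^2 for tau_1 ~ U[0,1], as an extended real (possibly +oo). *)
Definition ms_second_moment (R : realType) (z : R[i]) : \bar R :=
  (\int[lebesgue_measure]_(t in `[0%R, 1%R]) (sqmod (ampl z t))%:E)%E.

Definition R_MS (R : realType) : set R[i] :=
  [set z | (ms_second_moment z < 1%:E)%E].

Definition C_minus (R : realType) : set R[i] := [set z | complex.Re z < 0].

(* Main.v *)
Require Import Defs.
From HB Require Import structures.
From mathcomp Require Import all_boot all_order all_algebra.
From mathcomp Require Import all_classical all_reals all_analysis.
From mathcomp Require Import complex.
From mathcomp Require Import measurable_realfun measurable_fun_approximation ring lra.
Import Order.TTheory GRing.Theory Num.Theory.
Local Open Scope classical_set_scope.

Section Aux.
Local Open Scope ring_scope.
Local Open Scope classical_set_scope.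
Variable R : realType.
Lemma minv : measurable_fun [set: R] (@GRing.inv R).
Proof.
have -> : [set: R] = ~` [set 0] `|` [set 0] by rewrite setUCl.
have c0 : closed ([set 0] : set R) by apply: compact_closed; [exact: Rhausdorff | exact: compact_set1].
apply/measurable_funU.
- by apply: measurableC; exact: closed_measurable.
- exact: closed_measurable.
split; last exact: measurable_fun_set1.
apply: open_continuous_measurable_fun; first exact: closed_openC.
move=> x; rewrite inE /= => /eqP x0; exact: inv_continuous.
Qed.
Definition Bf (a b t : R) := (1 - a * t)^+2 + (- (b * t))^+2.
Definition Ff (a b t : R) :=
  let x := 1 - a * t in let y := - (b * t) in
  (1 + (a * x + b * y) / Bf a b t)^+2 + ((b * x - a * y) / Bf a b t)^+2.
Definition Nf (a b t : R) := (1 - a * t + a)^+2 + (- (b * t) + b)^+2.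

Lemma amplE (a b t : R) : sqmod (ampl (a +i* b)%C t) = Ff a b t.
Proof. rewrite /sqmod /ampl /Ff /Bf /=. rewrite !mulr0 ?mul0r !subr0 ?add0r ?sub0r. ring. Qed.

Lemma FfE a b t : Bf a b t != 0 -> Ff a b t = Nf a b t / Bf a b t.
Proof. move=> B0; rewrite /Ff /Nf; rewrite /Bf in B0 *. field. done. Qed.

Lemma poly_ge0 (a m u : R) : 0 <= a -> a^+2 <= m -> 0 <= u <= 1 ->
  0 <= (1-u) * (4 * a - 4 * a^+2 + a * m) + u * (4 * a - 4 * a^+2 + m^+2).
Proof.
move=> a0 am /andP[u0 u1].
have h1 : 0 <= 4 * a - 4 * a^+2 + a * m.
  have : a * a^+2 <= a * m by rewrite ler_wpM2l.
  have : 0 <= a * (a - 2)^+2 by rewrite mulr_ge0 // sqr_ge0.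
  move=> *; nra.
have h2 : 0 <= 4 * a - 4 * a^+2 + m^+2.
  have hm : a^+4 <= m^+2.
    have : 0 <= a^+2 by rewrite sqr_ge0.
    move=> *; nra.
  have : 0 <= a * ((a - 6/5)^+2 * (a + 12/5)).
    apply: mulr_ge0 => //; apply: mulr_ge0; [exact: sqr_ge0| lra].
  move=> *; nra.
nra.
Qed.

Lemma pair_ge2 a b t : 0 <= a -> 0 <= t <= 1 -> Bf a b t != 0 -> Bf a b (1 - t) != 0 ->
  2 <= Ff a b t + Ff a b (1 - t).
Proof.
move=> a0 t01 B1 B2; rewrite !FfE //.
have p1 : 0 < Bf a b t by rewrite lt_def B1 /Bf addr_ge0 // sqr_ge0.
have p2 : 0 < Bf a b (1-t) by rewrite lt_def B2 /Bf addr_ge0 // sqr_ge0.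
have key : Nf a b t * Bf a b (1-t) + Nf a b (1-t) * Bf a b t - 2 * Bf a b t * Bf a b (1-t)
   = (1-(1-2 * t)^+2) * (4 * a - 4 * a^+2 + a * (a^+2+b^+2)) + (1-2 * t)^+2 * (4 * a - 4 * a^+2 + (a^+2+b^+2)^+2).
  rewrite /Nf /Bf; ring.
have := @poly_ge0 a (a^+2+b^+2) ((1-2 * t)^+2) a0.
have hu : 0 <= (1-2 * t)^+2 <= 1.
  case/andP: t01 => *; apply/andP; split; [exact: sqr_ge0| nra].
have hm : a^+2 <= a^+2 + b^+2 by have := sqr_ge0 b; lra.
move=> /(_ hm hu); rewrite -key => hP.
rewrite -subr_ge0.
have -> : Nf a b t / Bf a b t + Nf a b (1 - t) / Bf a b (1 - t) - 2 =
  (Nf a b t * Bf a b (1-t) + Nf a b (1-t) * Bf a b t - 2 * Bf a b t * Bf a b (1-t)) / (Bf a b t * Bf a b (1-t)).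
  by field; apply/andP; split.
by rewrite divr_ge0 // mulr_ge0 // ltW.
Qed.
Local Notation leb := (@lebesgue_measure R).

Definition phi : measurableTypeR R -> measurableTypeR R := fun t => (1 - t : R).
Lemma mphi0 : measurable_fun [set: R] (fun t : R => 1 - t).
Proof. by apply: measurable_funB. Qed.
Lemma mphi : measurable_fun [set: measurableTypeR R] phi.
Proof. exact: mphi0. Qed.

Lemma leb_refl (A : set R) : measurable A -> leb A = pushforward leb phi A.
Proof.
move=> mA.
pose mu2 := measure_function_pushforward__canonical__measure_function_Measure leb mphi.
have := @lebesgue_measure_unique R mu2 _ A mA; apply.
move=> _ [[x y] _ <-] /=.
rewrite /pushforward.
have -> : phi @^-1` `]x, y] = `[1 - y, 1 - x[.
  apply/seteqP; split => t /=; rewrite /phi !in_itv /=.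
    by move=> /andP[h1 h2]; apply/andP; split; lra.
  by move=> /andP[h1 h2]; apply/andP; split; lra.
rewrite !lebesgue_measure_itv /= !lte_fin.
have -> : (1 - y < 1 - x) = (x < y) by apply/idP/idP; lra.
case: ifP => // _; rewrite -!EFinD; congr EFin; ring.
Qed.

Lemma refl_int (f : R -> \bar R) : measurable_fun (`[0%R, 1%R] : set R) f -> (forall x, (0 <= f x)%E) ->
  (\int[leb]_(x in `[0%R, 1%R]) f (1 - x)%R = \int[leb]_(x in `[0%R, 1%R]) f x)%E.
Proof.
move=> mf f0.
pose mu2 := measure_function_pushforward__canonical__measure_function_Measure leb mphi.
rewrite [RHS](eq_measure_integral mu2); last first.
  by move=> A mA _; exact: leb_refl.
rewrite (ge0_integral_pushforward mphi) //.
have -> : phi @^-1` `[0%R, 1%R] = `[0%R, 1%R].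
  apply/seteqP; split => t /=; rewrite /phi !in_itv /=.
    by move=> /andP[h1 h2]; apply/andP; split; lra.
  by move=> /andP[h1 h2]; apply/andP; split; lra.
by [].
Qed.
Lemma mFf a b : measurable_fun [set: R] (Ff a b).
Proof.
rewrite /Ff /Bf /=.
have mB : measurable_fun [set: R] (fun t => ((1 - a * t)^+2 + (- (b * t))^+2)^-1).
  apply: (measurableT_comp minv) => //.
  apply: measurable_funD; apply: measurable_funX => //.
    by apply: measurable_funB => //; apply: measurable_funM.
  by apply: measurable_funN; apply: measurable_funM.
apply: measurable_funD; apply: measurable_funX.
  apply: measurable_funD => //; apply: measurable_funM => //.
  apply: measurable_funD; apply: measurable_funM => //.
    by apply: measurable_funB => //; apply: measurable_funM.
  by apply: measurable_funN; apply: measurable_funM.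
apply: measurable_funM => //.
apply: measurable_funB; apply: measurable_funM => //.
  by apply: measurable_funB => //; apply: measurable_funM.
by apply: measurable_funN; apply: measurable_funM.
Qed.

Lemma Bf0 (a b t : R) : Bf a b t = 0 -> t = a^-1.
Proof.
rewrite /Bf => h.
have hx : (1 - a * t)^+2 = 0.
  have := sqr_ge0 (1 - a * t); have := sqr_ge0 (- (b * t)); lra.
move/eqP: hx; rewrite sqrf_eq0 subr_eq0 => /eqP h1.
have anz : a != 0 by apply/eqP => a0; move: h1; rewrite a0 mul0r => /eqP; rewrite oner_eq0.
by apply: (mulfI anz); rewrite mulfV.
Qed.

Lemma Ff_ge0 (a b t : R) : 0 <= Ff a b t.
Proof. by rewrite /Ff addr_ge0 // sqr_ge0. Qed.

Lemma main_ineq (a b : R) : 0 <= a ->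
  (1 <= \int[leb]_(t in `[0%R, 1%R]) (Ff a b t)%:E)%E.
Proof.
move=> a0.
set I := (\int[leb]_(t in `[0%R, 1%R]) (Ff a b t)%:E)%E.
have mF : measurable_fun [set: R] (Ff a b) := mFf a b.
have mFE : measurable_fun (`[0%R, 1%R] : set R) (fun t => (Ff a b t)%:E).
  apply/measurable_EFinP; exact: measurable_funTS.
have mF1 : measurable_fun (`[0%R, 1%R] : set R) (fun t => (Ff a b (1 - t))%:E).
  apply/measurable_EFinP; apply: measurable_funTS.
  by apply: (measurableT_comp mF); apply: measurable_funB.
have hII : (I + I = \int[leb]_(t in `[0%R, 1%R]) ((Ff a b t)%:E + (Ff a b (1 - t))%:E))%E.
  rewrite ge0_integralD //; last 2 first.
  - by move=> t _; rewrite lee_fin Ff_ge0.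
  - by move=> t _; rewrite lee_fin Ff_ge0.
  congr (_ + _)%E; rewrite /I.
  rewrite -(@refl_int (fun t => (Ff a b t)%:E)) //.
  by move=> x; rewrite lee_fin Ff_ge0.
have h2 : (2%:E <= I + I)%E.
  rewrite hII.
  have -> : (2%:E = \int[leb]_(t in `[0%R, 1%R]) (cst 2%:E) t)%E.
    rewrite integral_cst //= lebesgue_measure_itv /= lte_fin ltr01 -EFinB -EFinM.
    by congr EFin; ring.
  apply: ae_ge0_le_integral => //.
  - by move=> t _; rewrite lee_fin.
  - by move=> t _; rewrite adde_ge0 // lee_fin Ff_ge0.
  - exact: (emeasurable_funD mFE mF1).
  apply: (@negligibleS _ _ _ leb ([set a^-1] `|` [set 1 - a^-1])).
    move=> t /= hn; apply: contrapT => hN; apply: hn => ht.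
    rewrite -EFinD lee_fin; apply: pair_ge2 => //.
    + by apply/eqP => /Bf0 e; apply: hN; left.
    + apply/eqP => /Bf0 e; apply: hN; right => /=; rewrite -e; ring.
  apply: negligibleU; apply/negligibleP => //; exact: lebesgue_measure_set1.
clear hII; move: h2; have : (0 <= I)%E by apply: integral_ge0 => t _; rewrite lee_fin Ff_ge0.
case: I => [r| |] //=.
  by rewrite -EFinD !lee_fin => r0 hr; lra.
by move=> _ _; exact: leey.
Qed.
End Aux.

Theorem fact2 (R : realType) : @R_MS R `<=` @C_minus R.
Proof.
move=> [a b]; rewrite /R_MS /C_minus /= => hlt.
rewrite ltNge; apply/negP => a0; move: hlt; apply/negP; rewrite -leNgt.
rewrite /ms_second_moment.
under eq_integral do rewrite amplE.
exact: main_ineq.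
Qed.
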